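(* Let $p_1,\ldots,p_m\in[0,1]$ and $\alpha\in[0,1]$, and let $h=h_\alpha$, $d_\alpha$, $z=z_\alpha$, $Z=Z_\alpha$ and $B=B_\alpha$ be as in the context. Then: (1) $d_\alpha(S)=d_\alpha(S\cap Z)$ for all $S\subseteq\{1,\ldots,m\}$; (2) $Z$ is minimal, i.e. if $Y\subseteq\{1,\ldots,m\}$ satisfies $d_\alpha(S)=d_\alpha(S\cap Y)$ for all $S\subseteq\{1,\ldots,m\}$, then $Z\subseteq Y$; (3) $d_\alpha(Z)=m-h$; (4) $Z\subseteq B$.
   Context: Setting: $m$ hypotheses with $p$-values $p_1,\ldots,p_m\in[0,1]$; let $r_1,\ldots,r_m$ be a permutation of $1,\ldots,m$ with $p_{r_1}\le\cdots\le p_{r_m}$, write $p_{(i)}=p_{r_i}$, $L_i=\{r_1,\ldots,r_i\}$ and $K_i=\{r_{m-i+1},\ldots,r_m\}$ for $0\le i\le m$. For $I\subseteq\{1,\ldots,m\}$, $p_{(i:I)}$ is the $i$-th smallest of $\{p_j:j\in I\}$. Simes local test: $I\in\mathcal{U}_\alpha$ iff there is $1\le i\le|I|$ with $|I|p_{(i:I)}\le i\alpha$. Closed testing: $\mathcal{X}_\alpha=\{I: J\in\mathcal{U}_\alpha\ \forall J\supseteq I\}$. For $S\subseteq\{1,\ldots,m\}$: $t_\alpha(S)=\max\{|I|: I\subseteq S, I\notin\mathcal{X}_\alpha\}$, $d_\alpha(S)=|S|-t_\alpha(S)$. $h_\alpha=\max\{0\le i\le m: K_i\notin\mathcal{U}_\alpha\}$.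 $z_\alpha=0$ if $h_\alpha=m$ and otherwise $z_\alpha=\min\{m-h_\alpha\le i\le m: h_\alpha p_{(i)}\le(i-m+h_\alpha+1)\alpha\}$; $Z_\alpha=L_{z_\alpha}$. Benjamini–Hochberg: $b_\alpha=\max\{1\le i\le m: m p_{(i)}\le i\alpha\}$ ($b_\alpha=0$ if no such $i$), $B_\alpha=L_{b_\alpha}$. *)

(* Defs.v *)
(* Indices {1..m} are represented by 'I_m (0-based);
   orders p_(i) keep the paper's 1-based i. *)
From mathcomp Require Import all_boot all_order all_algebra.
From mathcomp Require Import perm.
Set Implicit Arguments. Unset Strict Implicit. Unset Printing Implicit Defensive.
Import Order.TTheory GRing.Theory Num.Theory.
Local Open Scope ring_scope.

Section Defs.
Variables (R : realFieldType) (m : nat) (p : 'I_m -> R) (alpha : R).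

Definition pI (i : nat) (I : {set 'I_m}) : R :=
  nth 0 (sort <=%R [seq p j | j <- enum I]) i.-1.

Definition simesU (I : {set 'I_m}) : bool :=
  [exists i : 'I_#|I|, #|I|%:R * pI i.+1 I <= (i.+1)%:R * alpha].

Definition closedX (I : {set 'I_m}) : bool :=
  [forall J : {set 'I_m}, (I \subset J) ==> simesU J].

Definition t_alpha (S : {set 'I_m}) : nat :=
  (\max_(I : {set 'I_m} | (I \subset S) && ~~ closedX I) #|I|)%N.

Definition d_alpha (S : {set 'I_m}) : nat := (#|S| - t_alpha S)%N.

Variable r : {perm 'I_m}.

Definition pord (i : nat) : R := nth 0 [seq p (r j) | j <- enum 'I_m] i.-1.

Definition Lset (i : nat) : {set 'I_m} := [set r j | j : 'I_m & (j < i)%N].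
Definition Kset (i : nat) : {set 'I_m} := [set r j | j : 'I_m & (m - i <= j)%N].

Definition h_alpha : nat :=
  (\max_(i < m.+1 | ~~ simesU (Kset i)) (i : nat))%N.

(* z_alpha: 0 if h = m, otherwise least i in [m-h, m] with
   h p_(i) <= (i - m + h + 1) alpha (m is an unreachable default, the set
   being nonempty under the standing assumptions). *)
Definition z_alpha : nat :=
  if h_alpha == m then 0%N else
  head m [seq i <- iota (m - h_alpha) h_alpha.+1 |
           h_alpha%:R * pord i <= (i + h_alpha + 1 - m)%N%:R * alpha].

Definition Z_alpha : {set 'I_m} := Lset z_alpha.

Definition bh_cond (i : nat) : bool :=
  (0 < i)%N && (m%:R * pord i <= i%:R * alpha).

Definition b_alpha : nat :=
  (\max_(i < m.+1 | bh_cond i) (i : nat))%N.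

Definition B_alpha : {set 'I_m} := Lset b_alpha.

End Defs.

(* Main.v *)
Require Import Defs.
From mathcomp Require Import all_boot all_order all_algebra perm zify.
Import Order.TTheory GRing.Theory Num.Theory.
Local Open Scope ring_scope.

Lemma card_ordQ m (Q : pred nat) : #|[set k : 'I_m | Q k]| = count Q (iota 0 m).
Proof.
rewrite -val_enum_ord count_map cardsE cardE /enum_mem size_filter -enumT.
rewrite (@eq_filter _ _ predT) // filter_predT.
by apply: eq_count.
Qed.

Lemma count_range n a b :
  count (fun k => (a <= k < b)%N) (iota 0 n) = (minn n b - a)%N.
Proof.
elim: n => [|n IH]; first by rewrite /= min0n.
rewrite -addn1 iotaD count_cat IH /= addn0 add0n.
case: (leqP a n) => ha; case: (ltnP n b) => hb /=; lia.
Qed.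

Lemma card_range m a b : #|[set k : 'I_m | (a <= k < b)%N]| = (minn m b - a)%N.
Proof. by rewrite -count_range -(card_ordQ m (fun k => (a <= k < b)%N)). Qed.

Lemma card_setI_count (T : finType) (I A : {set T}) :
  #|I :&: A| = count (mem A) (enum I).
Proof. by rewrite cardE (perm_size (enum_setI I A)) size_filter. Qed.

Lemma sorted_count (R : realFieldType) (s : seq R) (P : pred R) :
  sorted <=%R s -> (forall x y, x <= y -> P y -> P x) ->
  forall k, (k < size s)%N -> P (nth 0 s k) = (k < count P s)%N.
Proof.
move=> hs hP; elim: s hs => [//|x s IH] hs k hk /=.
have hs' : sorted <=%R s by move: hs; rewrite /=; apply: path_sorted.
have hall : all (fun y => x <= y) s.
  by apply: order_path_min hs; exact: le_trans.
case Px: (P x).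
  case: k hk => [|k] hk /=; first by rewrite Px.
  by rewrite IH.
have nP : forall y, y \in s -> P y = false.
  move=> y ys; apply/negbTE/negP => Py.
  by move/allP: hall => /(_ y ys) hxy; rewrite (hP _ _ hxy Py) in Px.
rewrite (eq_in_count nP) count_pred0 add0n ltn0.
case: k hk => [|k] hk /=; first by [].
by apply: nP; apply: mem_nth.
Qed.

Lemma count_ge n a : count (fun k => (a <= k)%N) (iota 0 n) = (n - a)%N.
Proof.
elim: n => [|n IH] //; rewrite -addn1 iotaD count_cat IH /= addn0 add0n.
case: (leqP a n) => ha /=; lia.
Qed.

Lemma count_lt n b : count (fun k => (k < b)%N) (iota 0 n) = minn n b.
Proof.
elim: n => [|n IH]; first by rewrite min0n.
rewrite -addn1 iotaD count_cat IH /= addn0 add0n.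
case: (ltnP n b) => hb /=; lia.
Qed.

Lemma ivt (f : nat -> nat) n c : (f 0 <= c)%N -> (c <= f n)%N ->
  (forall i, (i < n)%N -> (f i.+1 <= (f i).+1)%N) -> exists2 i, (i <= n)%N & f i = c.
Proof.
elim: n => [|n IH] h0 hn hs; first by exists 0%N => //; apply/eqP; rewrite eqn_leq h0.
case: (leqP c (f n)) => hc.
  have [i hi fi] := IH h0 hc (fun i hi => hs i (leqW hi)).
  by exists i => //; lia.
exists n.+1 => //; have := hs n (ltnSn n); lia.
Qed.

Lemma head_filter_iota a n (P : pred nat) d i : (a <= i < a + n)%N -> P i ->
  let z := head d [seq j <- iota a n | P j] in
  [/\ (a <= z)%N, (z <= i)%N, P z & forall j, (a <= j < z)%N -> ~~ P j].
Proof.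
elim: n a => [|n IH] a hi Pi; first by lia.
rewrite /= ; case Pa: (P a) => /=.
  split => //; try lia; move=> j; lia.
have hai : a != i by apply/eqP => eai; rewrite -eai Pa in Pi.
have hi' : (a.+1 <= i < a.+1 + n)%N by lia.
case: (IH a.+1 hi' Pi) => h1 h2 h3 h4; split => //; first lia.
move=> j hj; case: (eqVneq j a) => [->|hja]; first by rewrite Pa.
apply: h4; lia.
Qed.

Section Main.
Variables (R : realFieldType) (m : nat) (p : 'I_m -> R) (alpha : R) (r : {perm 'I_m}).
Hypotheses (hp : forall j, 0 <= p j <= 1) (halpha : 0 <= alpha <= 1)
  (hsort : forall i j : 'I_m, (i <= j)%N -> p (r i) <= p (r j)).

Definition A (n u : nat) : {set 'I_m} := [set j | n%:R * p j <= u%:R * alpha].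

Lemma p0 j : 0 <= p j. Proof. by case/andP: (hp j). Qed.
Lemma a0 : 0 <= alpha. Proof. by case/andP: halpha. Qed.

Lemma A_pre n u (k k' : 'I_m) : (k' <= k)%N -> r k \in A n u -> r k' \in A n u.
Proof.
rewrite !inE => hk; apply: le_trans; apply: ler_wpM2l => //; exact: hsort.
Qed.

Lemma A_mono n n' u u' : (n' <= n)%N -> (u <= u')%N -> A n u \subset A n' u'.
Proof.
move=> hn hu; apply/subsetP => j; rewrite !inE => H.
apply: le_trans _ (le_trans H _).
- by apply: (ler_wpM2r (p0 j)); rewrite ler_nat.
- by apply: (ler_wpM2r a0); rewrite ler_nat.
Qed.

Lemma nat_alpha (a b : nat) : a%:R * alpha < b%:R * alpha -> (a < b)%N.
Proof.
move=> H; rewrite ltnNge; apply/negP => hba.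
have : b%:R * alpha <= a%:R * alpha by apply: (ler_wpM2r a0); rewrite ler_nat.
by rewrite leNgt H.
Qed.

Lemma simesU_cnt (I : {set 'I_m}) : simesU p alpha I = [exists i : 'I_#|I|, (i.+1 <= #|I :&: A #|I| i.+1|)%N].
Proof.
apply: eq_existsb => i; rewrite /pI /=.
set s := sort _ _.
have ss : sorted <=%R s by apply: sort_sorted; exact: le_total.
have sz : size s = #|I| by rewrite size_sort size_map cardE.
rewrite (@sorted_count _ _ (fun x => #|I|%:R * x <= i.+1%:R * alpha) ss); last 2 first.
- move=> x y hxy; apply: le_trans; apply: ler_wpM2l => //.
- by rewrite sz.
congr (_ < _)%N.
rewrite /s; have := permEl (perm_sort <=%R [seq p j | j <- enum I]).
move/seq.permP => ->; rewrite count_map card_setI_count.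
by apply: eq_count => j; rewrite /= inE.
Qed.

Lemma Unot (I : {set 'I_m}) u : ~~ simesU p alpha I -> (0 < u)%N -> (u <= #|I|)%N ->
  (#|I :&: A #|I| u| < u)%N.
Proof.
rewrite simesU_cnt => /existsPn H hu huI.
have := H (Ordinal (n:=#|I|) (m:=u.-1) ltac:(lia)); rewrite /= prednK // -ltnNge //.
Qed.

Arguments Unot [I u].

Lemma Uyes (I : {set 'I_m}) : simesU p alpha I ->
  exists u, [/\ (0 < u)%N, (u <= #|I|)%N & (u <= #|I :&: A #|I| u|)%N].
Proof. by rewrite simesU_cnt => /existsP [i hi]; exists i.+1; split => //. Qed.

Arguments Uyes [I].

Lemma Uintro (I : {set 'I_m}) : (forall u, (0 < u)%N -> (u <= #|I|)%N -> (#|I :&: A #|I| u| < u)%N) ->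
  ~~ simesU p alpha I.
Proof.
move=> H; rewrite simesU_cnt; apply/existsPn => i; rewrite -ltnNge; apply: H => //.
Qed.


Arguments Uintro [I].
Arguments A_mono [n n' u u'].

Definition Rk (Q : pred nat) : {set 'I_m} := [set r j | j : 'I_m & Q j].

Lemma mem_Rk Q (k : 'I_m) : (r k \in Rk Q) = Q k.
Proof. by rewrite /Rk mem_imset ?inE //; exact: perm_inj. Qed.

Lemma card_Rk Q : #|Rk Q| = count Q (iota 0 m).
Proof.
rewrite card_imset; last exact: perm_inj.
by rewrite -(card_ordQ m Q) cardsE.
Qed.

Lemma rk_ex (j : 'I_m) : exists k, j = r k.
Proof. by exists (r^-1 j)%g; rewrite permKV. Qed.

Lemma KsetE i : Kset r i = Rk (fun k => m - i <= k)%N. Proof. by []. Qed.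
Lemma LsetE i : Lset r i = Rk (fun k => k < i)%N. Proof. by []. Qed.

Lemma card_K i : (i <= m)%N -> #|Kset r i| = i.
Proof. by move=> hi; rewrite KsetE card_Rk count_ge; lia. Qed.

Arguments card_K [i].

Lemma card_L i : (i <= m)%N -> #|Lset r i| = i.
Proof. by move=> hi; rewrite LsetE card_Rk count_lt; lia. Qed.

Arguments card_L [i].

Lemma card_Rrange a b : #|Rk (fun k => a <= k < b)%N| = (minn m b - a)%N.
Proof. by rewrite card_Rk count_range. Qed.

Lemma Rk_sub (Q Q' : pred nat) : (forall k, Q k -> Q' k) -> Rk Q \subset Rk Q'.
Proof.
move=> H; apply/subsetP => j; case: (rk_ex j) => k ->; rewrite !mem_Rk; exact: H.
Qed.

Lemma K0 : Kset r 0 = set0.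
Proof.
apply/setP => j; case: (rk_ex j) => k ->; rewrite KsetE mem_Rk inE subn0.
by rewrite leqNgt ltn_ord.
Qed.

Lemma Km : Kset r m = setT.
Proof. by apply/setP => j; case: (rk_ex j) => k ->; rewrite KsetE mem_Rk inE subnn. Qed.

Lemma simesU0 : ~~ simesU p alpha set0.
Proof. by apply: Uintro => u hu; rewrite cards0; lia. Qed.

Local Notation h := (h_alpha p alpha r).

Lemma h_spec : (h <= m)%N /\ ~~ simesU p alpha (Kset r h).
Proof.
have w : (0 < #|(fun i : 'I_m.+1 => ~~ simesU p alpha (Kset r i))|)%N.
  apply/card_gt0P; exists ord0; by rewrite /in_mem /= K0 simesU0.
case: (@eq_bigmax_cond _ (fun i : 'I_m.+1 => ~~ simesU p alpha (Kset r i)) (fun i => i : nat) w).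
move=> i0 Hi0 E; have -> : h = i0 by exact: E.
by split; [rewrite -ltnS ltn_ord | exact: Hi0].
Qed.

Lemma hle : (h <= m)%N. Proof. by case: h_spec. Qed.
Lemma hK : ~~ simesU p alpha (Kset r h). Proof. by case: h_spec. Qed.

Lemma hmax i : (i <= m)%N -> ~~ simesU p alpha (Kset r i) -> (i <= h)%N.
Proof.
move=> him H; have := @leq_bigmax_cond _ (fun i : 'I_m.+1 => ~~ simesU p alpha (Kset r i))
  (fun i => i : nat) (Ordinal (n:=m.+1) (m:=i) ltac:(lia)) H.
by [].
Qed.


Lemma Kc_sub (X : {set 'I_m}) (Xpre : forall k k' : 'I_m, (k' <= k)%N -> r k \in X -> r k' \in X)
  n (k : 'I_m) : (m - n <= k)%N -> r k \in X -> ~: Kset r n \subset X.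
Proof.
move=> hk hX; apply/subsetP => j; case: (rk_ex j) => k' ->.
rewrite inE KsetE mem_Rk -ltnNge => hk'; apply: (Xpre k) => //; lia.
Qed.
Arguments Kc_sub [X] Xpre [n k].

Lemma card_lower (X J : {set 'I_m}) : (#|X| <= #|J :&: X| + (m - #|J|))%N.
Proof.
have h1 := cardsID J X.
have h2 : (#|X :\: J| <= #|~: J|)%N by apply: subset_leq_card; rewrite setDE subsetIr.
have h3 := cardsC J; rewrite card_ord in h3.
rewrite setIC; lia.
Qed.

Lemma card_exact (X K : {set 'I_m}) : ~: K \subset X -> (#|K :&: X| + (m - #|K|))%N = #|X|.
Proof.
move=> H; have h1 := cardsID K X.
have h2 : X :\: K = ~: K by rewrite setDE; apply/setIidPr.
have h3 := cardsC K; rewrite card_ord in h3.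
rewrite h2 setIC in h1; lia.
Qed.
Arguments card_exact [X K].

Lemma Kset_le (X : {set 'I_m}) (Xpre : forall k k' : 'I_m, (k' <= k)%N -> r k \in X -> r k' \in X)
  n (J : {set 'I_m}) : (n <= m)%N -> #|J| = n -> (#|Kset r n :&: X| <= #|J :&: X|)%N.
Proof.
move=> hn hJ.
case: (boolP [exists k : 'I_m, (m - n <= k)%N && (r k \in X)]).
  move/existsP => [k /andP [hk hX]].
  have := card_exact (Kc_sub Xpre hk hX); have := card_lower X J; rewrite card_K //; lia.
move/existsPn => H.
have -> : Kset r n :&: X = set0.
  apply/setP => j; case: (rk_ex j) => k ->; rewrite !inE KsetE mem_Rk.
  by have := H k; rewrite negb_and => /orP [/negbTE -> | /negbTE ->]; rewrite ?andbF.
by rewrite cards0.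
Qed.
Arguments Kset_le [X] Xpre [n J].

Lemma cardm (J : {set 'I_m}) : (#|J| <= m)%N.
Proof. by rewrite -[X in (_ <= X)%N]card_ord max_card. Qed.

Lemma KU (J : {set 'I_m}) : ~~ simesU p alpha J -> ~~ simesU p alpha (Kset r #|J|).
Proof.
move=> nJ; apply: Uintro => u hu; rewrite card_K ?cardm // => huJ.
have H1 := Kset_le (@A_pre #|J| u) (cardm J) erefl.
have H2 := Unot nJ hu huJ.
exact: leq_ltn_trans H1 H2.
Qed.

Arguments KU [J].

Definition NX (I : {set 'I_m}) := forall u, (0 < u)%N -> (#|I :&: A h u| < u)%N.

Arguments hmax [i].

Lemma NX_easy (I : {set 'I_m}) : ~~ closedX p alpha I -> NX I.
Proof.
rewrite /closedX => /forallPn [J]; rewrite negb_imply => /andP [sIJ nUJ] u hu.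
have hJh : (#|J| <= h)%N := hmax (cardm J) (KU nUJ).
case: (leqP u #|J|) => huJ.
  apply: leq_ltn_trans (Unot nUJ hu huJ); apply: subset_leq_card.
  by apply: setISS sIJ (A_mono _ _).
apply: leq_ltn_trans huJ.
exact: leq_trans (subset_leq_card (subsetIl _ _)) (subset_leq_card sIJ).
Qed.

Arguments NX_easy [I].

Lemma NX_K : NX (Kset r h).
Proof.
move=> u hu; case: (leqP u h) => huh.
  by have := Unot hK hu; rewrite card_K ?hle //; apply.
apply: leq_ltn_trans huh.
have := subset_leq_card (subsetIl (Kset r h) (A h u)); by rewrite card_K ?hle.
Qed.

Lemma Lev (k : 'I_m) u : (m - h <= k)%N -> (0 < u)%N -> r k \in A h u -> (k + 2 + h <= u + m)%N.
Proof.
move=> hk hu hA.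
have sub : Rk (fun k' => m - h <= k' < k.+1)%N \subset Kset r h :&: A h u.
  apply/subsetP => j; case: (rk_ex j) => k' ->; rewrite mem_Rk inE => /andP [h1 h2].
  by rewrite KsetE mem_Rk h1 /=; apply: (@A_pre h u k k') => //; lia.
have := subset_leq_card sub; rewrite card_Rrange.
have := NX_K _ hu; have := ltn_ord k; have := hle; lia.
Qed.


Lemma NX_hard (I : {set 'I_m}) : NX I -> ~~ closedX p alpha I.
Proof.
move=> HI.
have hIh : (#|I| <= h)%N.
  case: (leqP m h) => hmh; first exact: leq_trans (cardm I) hmh.
  have UK : simesU p alpha (Kset r h.+1).
    by apply: contraT => H; have := hmax hmh H; lia.
  case: (Uyes UK) => u []; rewrite card_K // => hu hu1 hu2.
  have : (0 < #|Kset r h.+1 :&: A h.+1 u|)%N by lia.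
  case/card_gt0P => j; case: (rk_ex j) => k ->; rewrite inE KsetE mem_Rk => /andP [hk hX].
  have := card_exact (Kc_sub (@A_pre h.+1 u) hk hX); rewrite card_K //.
  have := card_lower (A h.+1 u) I.
  have := subset_leq_card (setIS I (A_mono (n:=h.+1) (n':=h) (u:=u) (u':=u) (leqnSn h) (leqnn u))).
  have := HI u hu; have := cardm I; lia.
pose f i := #|I :|: Kset r i|.
have f0 : f 0%N = #|I| by rewrite /f K0 setU0.
have fm : f m = m by rewrite /f Km setUT cardsT card_ord.
have fs : forall i, (i < m)%N -> (f i.+1 <= (f i).+1)%N.
  move=> i hi; pose o := Ordinal (n:=m) (m:=(m - i.+1)%N) ltac:(lia); pose x := r o.
  have sub : I :|: Kset r i.+1 \subset x |: (I :|: Kset r i).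
    apply/subsetP => j; rewrite !inE => /orP [->|]; first by rewrite !orbT.
    case: (rk_ex j) => k ->; rewrite KsetE mem_Rk => hk.
    have [e|ne] := eqVneq (k : nat) (m - i.+1)%N.
      by rewrite (_ : k = o) ?eqxx //; apply: val_inj.
    by rewrite KsetE mem_Rk; apply/orP; right; apply/orP; right; lia.
  have := subset_leq_card sub; rewrite cardsU1 /f; case: (_ \notin _) => /=; lia.
have e0 : (f 0%N <= h)%N by rewrite f0.
have em : (h <= f m)%N by rewrite fm hle.
have [i _ fi] := @ivt f m h e0 em fs.
set J := I :|: Kset r i.
have cJ : #|J| = h by [].
have nUJ : ~~ simesU p alpha J.
  apply: Uintro; rewrite cJ => u hu huh.
  case: (boolP [exists k : 'I_m, (m - i <= k)%N && (r k \in A h u)]).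
    move/existsP => [k /andP [hk hX]].
    have cK := Kc_sub (@A_pre h u) hk hX.
    have cJA : ~: J \subset A h u by apply: subset_trans cK; rewrite setCS subsetUr.
    have := card_exact cJA; have := card_lower (A h u) (Kset r h); rewrite (card_K hle).
    have := Unot hK hu; rewrite (card_K hle) => /(_ huh). lia.
  move/existsPn => H.
  have sub : J :&: A h u \subset I :&: A h u.
    apply/subsetP => j; rewrite !inE => /andP [/orP [jI|jK] jA]; first by rewrite jI jA.
    exfalso; move: jK jA; case: (rk_ex j) => k ->; rewrite KsetE mem_Rk => hk hA.
    by have := H k; rewrite hk inE hA.
  exact: leq_ltn_trans (subset_leq_card sub) (HI u hu).
apply/negP => cX; have := forallP cX J; rewrite subsetUl /= => UJ.
by rewrite UJ in nUJ.
Qed.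


Arguments NX_hard [I].

Lemma NX0 : NX set0.
Proof. by move=> u hu; rewrite set0I cards0. Qed.

Lemma NX_sub (I' I : {set 'I_m}) : I' \subset I -> NX I -> NX I'.
Proof.
move=> s H u hu; apply: leq_ltn_trans (H u hu); apply: subset_leq_card; exact: setSI.
Qed.

Local Notation t := (t_alpha p alpha).
Local Notation d := (d_alpha p alpha).

Lemma t_ge (I S : {set 'I_m}) : I \subset S -> NX I -> (#|I| <= t S)%N.
Proof.
move=> sIS nI.
rewrite /t_alpha; apply: (@leq_bigmax_cond _ _ (fun I : {set 'I_m} => #|I|) I).
by rewrite sIS /=; exact: NX_hard.
Qed.

Arguments t_ge [I S].

Lemma t_le (S : {set 'I_m}) k : (forall I : {set 'I_m}, I \subset S -> NX I -> (#|I| <= k)%N) -> (t S <= k)%N.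
Proof.
move=> H; apply/bigmax_leqP => I /andP [sIS nX]; exact: H sIS (NX_easy nX).
Qed.

Lemma t_att (S : {set 'I_m}) : exists2 I : {set 'I_m}, (I \subset S) /\ NX I & #|I| = t S.
Proof.
have w : (0 < #|(fun I : {set 'I_m} => (I \subset S) && ~~ closedX p alpha I)|)%N.
  by apply/card_gt0P; exists set0; rewrite /in_mem /= sub0set /=; exact: NX_hard NX0.
case: (@eq_bigmax_cond _ (fun I : {set 'I_m} => (I \subset S) && ~~ closedX p alpha I)
  (fun I => #|I|) w) => I0 HI0 E.
move: HI0; rewrite /in_mem /= => /andP [s n]; exists I0; first by split => //; exact: NX_easy.
by rewrite /t_alpha E.
Qed.

Lemma t_card (S : {set 'I_m}) : (t S <= #|S|)%N.
Proof. by apply: t_le => I s _; exact: subset_leq_card. Qed.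

Lemma tsplit_le (S Y : {set 'I_m}) : (t S <= t (S :&: Y) + #|S :\: Y|)%N.
Proof.
case: (t_att S) => I [sIS nI] <-; rewrite -(cardsID Y I); apply: leq_add.
  by apply: t_ge; [exact: setSI | exact: NX_sub (subsetIl _ _) nI].
by apply: subset_leq_card; exact: setSD.
Qed.

Lemma d_mono (S' S : {set 'I_m}) : S' \subset S -> (d S' <= d S)%N.
Proof.
move=> sub; have := tsplit_le S S'; rewrite (setIidPr sub).
have := cardsID S' S; rewrite (setIidPr sub); have := t_card S'.
rewrite /d_alpha; lia.
Qed.

Arguments d_mono [S' S].

Lemma pord_r (k : 'I_m) : pord p r k.+1 = p (r k).
Proof. by rewrite /pord /= (nth_map k) ?size_enum_ord // nth_ord_enum. Qed.

Definition Cz (i : nat) : bool := h%:R * pord p r i <= (i + h + 1 - m)%N%:R * alpha.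

Local Notation z := (z_alpha p alpha r).

Lemma z_hm : h = m -> z = 0%N.
Proof. by move=> e; rewrite /z_alpha e eqxx. Qed.

Lemma UK1 : (h < m)%N -> simesU p alpha (Kset r h.+1).
Proof. by move=> hm; apply: contraT => H; have := hmax hm H; lia. Qed.

Lemma zspec : (h < m)%N -> exists istar,
  [/\ (m - h <= z <= istar)%N, (istar <= m)%N, Cz z,
      (forall j, (m - h <= j < z)%N -> ~~ Cz j) & bh_cond p alpha r istar].
Proof.
move=> hm.
case: (Uyes (UK1 hm)) => u []; rewrite card_K // => hu hu1 hu2.
pose o0 := Ordinal (n:=m) (m:=(m + u - h - 2)%N) ltac:(lia).
have hA : r o0 \in A h.+1 u.
  apply: contraT => nA.
  have sub : Kset r h.+1 :&: A h.+1 u \subset Rk (fun k => m - h.+1 <= k < m + u - h - 2)%N.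
    apply/subsetP => j; rewrite inE; case: (rk_ex j) => k ->; rewrite KsetE !mem_Rk => /andP [hk hX].
    rewrite hk /=; rewrite ltnNge; apply/negP => hk0.
    by move: nA; rewrite (@A_pre _ _ k o0 hk0 hX).
  have := subset_leq_card sub; rewrite card_Rrange; lia.
set istar := (m + u - h - 1)%N.
have Cs : Cz istar.
  rewrite /Cz (_ : istar = o0.+1); last by rewrite /istar /=; lia.
  rewrite pord_r (_ : (o0.+1 + h + 1 - m)%N = u); last by rewrite /=; lia.
  move: hA; rewrite inE; apply: le_trans; apply: (ler_wpM2r (p0 _)); rewrite ler_nat; lia.
have Bs : bh_cond p alpha r istar.
  rewrite /bh_cond (_ : (0 < istar)%N = true); last by rewrite /istar; lia.
  rewrite /= (_ : istar = o0.+1); last by rewrite /istar /=; lia.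
  rewrite pord_r; move: hA; rewrite inE => hA.
  rewrite -(ler_pM2l (_ : 0 < h.+1%:R)); last by rewrite ltr0n.
  rewrite mulrCA; apply: le_trans (ler_wpM2l (ler0n _ m) hA) _.
  rewrite mulrA -natrM mulrA -natrM; apply: (ler_wpM2r a0); rewrite ler_nat /=; nia.
have hz : z = head m [seq j <- iota (m - h) h.+1 | Cz j].
  by rewrite /z_alpha ifN //; apply/eqP; lia.
have := @head_filter_iota (m - h) h.+1 Cz m istar ltac:(rewrite /istar; lia) Cs.
rewrite /= -hz => -[h1 h2 h3 h4]; exists istar; split => //; rewrite /istar; try lia.
Qed.


Arguments nat_alpha [a b].
Arguments Lev [k u].

Section HM.
Hypothesis hm : (h < m)%N.
Local Notation v := (z - (m - h))%N.

Lemma zge : (m - h <= z)%N.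
Proof. by case: (zspec hm) => istar [/andP [h1 h2] _ _ _ _]. Qed.
Lemma zle : (z <= m)%N.
Proof. by case: (zspec hm) => istar [/andP [h1 h2] h3 _ _ _]; lia. Qed.

Lemma ZA (k : 'I_m) : (k < z)%N -> r k \in A h v.+1.
Proof.
case: (zspec hm) => istar [/andP[h1 h2] h3 Cs _ _] hk.
pose zo := Ordinal (n:=m) (m:=z.-1) ltac:(lia).
apply: (@A_pre _ _ zo k); first by rewrite /=; lia.
have ez : z = zo.+1 by rewrite /= prednK //; lia.
have Cs' := Cs; rewrite /Cz {1}ez pord_r in Cs'.
rewrite inE; apply: le_trans Cs' _; apply: (ler_wpM2r a0); rewrite ler_nat; lia.
Qed.

Lemma Znot (k : 'I_m) u : (m - h - 1 <= k)%N -> (k.+1 < z)%N -> (0 < u)%N ->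
  r k \in A h u -> (k + 3 + h <= u + m)%N.
Proof.
case: (zspec hm) => istar [/andP[h1 h2] h3 Cs h4 _] hk1 hk2 hu.
have := h4 k.+1 ltac:(lia); rewrite /Cz pord_r -ltNge => lt.
rewrite inE => hA; have := nat_alpha (lt_le_trans lt hA); lia.
Qed.

Arguments Znot [k u].

Lemma NXsub (I' : {set 'I_m}) : I' \subset Rk (fun k => m - h - 1 <= k < z)%N ->
  (#|I'| <= v)%N -> NX I'.
Proof.
move=> sub cI u hu; case: (ltnP v u) => huv.
  exact: leq_ltn_trans (leq_trans (subset_leq_card (subsetIl _ _)) cI) huv.
have sub2 : I' :&: A h u \subset Rk (fun k => m - h - 1 <= k < u + m - h - 2)%N.
  apply/subsetP => j; rewrite inE => /andP [jI jA]; have := subsetP sub j jI.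
  move: jA; case: (rk_ex j) => k -> jA; rewrite !mem_Rk => /andP [k1 k2].
  rewrite k1 /=; case: (eqVneq k.+1 z) => ek.
    have := @Lev k u ltac:(lia) hu jA; lia.
  have := Znot k1 ltac:(lia) hu jA; lia.
have := subset_leq_card sub2; rewrite card_Rrange; have := zge; lia.
Qed.

Lemma bound (I0 : {set 'I_m}) : I0 \subset Lset r z -> NX I0 -> (#|I0| <= v)%N.
Proof.
move=> s nI; have e : I0 :&: A h v.+1 = I0.
  apply/setIidPl; apply/subsetP => j jI; move: (subsetP s j jI).
  case: (rk_ex j) => k ->; rewrite LsetE mem_Rk; exact: ZA.
by have := nI v.+1 erefl; rewrite e.
Qed.

End HM.

Lemma KEY (I0 W : {set 'I_m}) : I0 \subset Lset r z -> NX I0 -> W \subset ~: Lset r z ->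
  NX (I0 :|: W).
Proof.
move=> sI nI sW; case: (eqVneq h m) => hm'.
  have := NX_K; rewrite hm' Km => NK; exact: NX_sub (subsetT _) NK.
have hm : (h < m)%N by have := hle; lia.
move=> u hu; rewrite setIUl cardsU.
have sub : W :&: A h u \subset Rk (fun k => z <= k < u + m - h - 1)%N.
  apply/subsetP => j; rewrite inE => /andP [jW jA]; have := subsetP sW j jW.
  move: jA; case: (rk_ex j) => k -> jA; rewrite inE LsetE mem_Rk -leqNgt => hk.
  rewrite mem_Rk hk /=; have := @Lev k u ltac:(have := zge hm; lia) hu jA; lia.
have := subset_leq_card sub; rewrite card_Rrange.
have := nI u hu; have := @bound hm I0 sI nI.
have := subset_leq_card (subsetIl I0 (A h u)); have := zge hm; lia.
Qed.


Arguments KEY [I0 W].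

Lemma P3 : d (Z_alpha p alpha r) = (m - h)%N.
Proof.
rewrite /Z_alpha; case: (eqVneq h m) => hm'.
  by rewrite z_hm // /d_alpha (card_L (leq0n m)) hm' subnn.
have hm : (h < m)%N by have := hle; lia.
have zg := zge hm; have zl := zle hm.
rewrite /d_alpha (card_L zl).
have tle : (t (Lset r z) <= z - (m - h))%N by apply: t_le => I sI nI; exact: (@bound hm I sI nI).
have tge : (z - (m - h) <= t (Lset r z))%N.
  have s1 : Rk (fun k => m - h <= k < z)%N \subset Lset r z.
    by rewrite LsetE; apply: Rk_sub => k /andP [].
  have n1 : NX (Rk (fun k => m - h <= k < z)%N).
    apply: (@NXsub hm); first by apply: Rk_sub => k /andP [k1 k2]; rewrite k2 andbT; lia.
    rewrite card_Rrange; lia.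
  by have := t_ge s1 n1; rewrite card_Rrange; lia.
lia.
Qed.

Lemma main_sec :
  [/\ (forall S : {set 'I_m},
         d_alpha p alpha S = d_alpha p alpha (S :&: Z_alpha p alpha r)),
      (forall Y : {set 'I_m},
         (forall S : {set 'I_m}, d_alpha p alpha S = d_alpha p alpha (S :&: Y)) ->
         Z_alpha p alpha r \subset Y),
      d_alpha p alpha (Z_alpha p alpha r) = (m - h_alpha p alpha r)%N
    & Z_alpha p alpha r \subset B_alpha p alpha r].
Proof.
split; last 2 first.
- exact: P3.
- rewrite /Z_alpha /B_alpha !LsetE; suff zb : (z <= b_alpha p alpha r)%N.
    by apply: Rk_sub => k hk; lia.
  case: (eqVneq h m) => hm'; first by rewrite z_hm.
  have hm : (h < m)%N by have := hle; lia.
  case: (zspec hm) => istar [/andP [h1 h2] h3 _ _ Bs].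
  apply: leq_trans h2 _.
  exact: (@leq_bigmax_cond _ (fun i : 'I_m.+1 => bh_cond p alpha r i) (fun i => i : nat)
    (Ordinal (n:=m.+1) (m:=istar) ltac:(lia)) Bs).
- move=> S; set Z := Z_alpha p alpha r.
  have le := tsplit_le S Z.
  case: (t_att (S :&: Z)) => I0 [sI0 nI0] cI0.
  have sZ : I0 \subset Lset r z := subset_trans sI0 (subsetIr _ _).
  have sD : S :\: Z \subset ~: Lset r z by rewrite setDE subsetIr.
  have nI := KEY sZ nI0 sD.
  have sub : I0 :|: (S :\: Z) \subset S.
    by rewrite subUset (subset_trans sI0 (subsetIl _ _)) subsetDl.
  have ge := t_ge sub nI.
  have disj : #|I0 :|: (S :\: Z)| = (#|I0| + #|S :\: Z|)%N.
    rewrite cardsU (_ : I0 :&: (S :\: Z) = set0) ?cards0 ?subn0 //.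
    apply/setP => j; rewrite !inE; case jI: (j \in I0) => //=.
    by rewrite /Z /Z_alpha (subsetP sZ j jI).
  have := cardsID Z S; have := t_card (S :&: Z).
  rewrite /d_alpha; lia.
- move=> Y H; apply/subsetP => j jZ; apply: contraT => jY.
  move: jZ; rewrite /Z_alpha; case: (eqVneq h m) => hm'.
    by rewrite z_hm // LsetE; case: (rk_ex j) => k ->; rewrite mem_Rk.
  have hm : (h < m)%N by have := hle; lia.
  move=> jZ; set Z := Lset r z.
  have e := H Z.
  have m1 : (d (Z :&: Y) <= d (Z :\ j))%N.
    apply: d_mono; apply/subsetP => j'; rewrite !inE => /andP [j'Z j'Y].
    rewrite j'Z andbT; apply/eqP => ej; by rewrite -ej j'Y in jY.
  have cD := cardsD1 j Z; rewrite jZ in cD.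
  have zg := zge hm; have zl := zle hm.
  have cZ : #|Z| = z by rewrite /Z card_L.
  have tge : (z - (m - h) <= t (Z :\ j))%N.
    move: jZ jY; case: (rk_ex j) => kj -> jZ jY.
    have hkz : (kj < z)%N by move: jZ; rewrite /Z LsetE mem_Rk.
    case: (ltnP kj (m - h)) => hkj.
      have s1 : Rk (fun k => m - h <= k < z)%N \subset Z :\ r kj.
        apply/subsetP => j'; case: (rk_ex j') => k ->; rewrite mem_Rk => /andP [k1 k2].
        rewrite !inE; apply/andP; split.
          by apply/negP => /eqP /perm_inj ekk; rewrite ekk in k1; lia.
        by rewrite /Z LsetE mem_Rk.
      have n1 : NX (Rk (fun k => m - h <= k < z)%N).
        apply: (@NXsub hm); first by apply: Rk_sub => k /andP [k1 k2]; rewrite k2 andbT; lia.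
        rewrite card_Rrange; lia.
      by have := t_ge s1 n1; rewrite card_Rrange; lia.
    set I' := Rk (fun k => m - h - 1 <= k < z)%N :\ r kj.
    have s1 : I' \subset Z :\ r kj.
      by apply: setSD; rewrite /Z LsetE; apply: Rk_sub => k /andP [].
    have cI : #|I'| = (z - (m - h))%N.
      have := cardsD1 (r kj) (Rk (fun k => m - h - 1 <= k < z)%N).
      rewrite mem_Rk card_Rrange (_ : (m - h - 1 <= kj < z)%N = true) /=; last by lia.
      rewrite /I'; lia.
    have n1 : NX I' by apply: (@NXsub hm); [exact: subsetDl | rewrite cI].
    by have := t_ge s1 n1; rewrite cI.
  have := P3; rewrite /Z_alpha -/Z => P3'.
  move: m1; rewrite -e P3' /d_alpha; lia.
Qed.

End Main.

Theorem lemma4 (R : realFieldType) (m : nat) (p : 'I_m -> R) (alpha : R)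
    (r : {perm 'I_m})
    (hp : forall j, 0 <= p j <= 1)
    (halpha : 0 <= alpha <= 1)
    (hsort : forall i j : 'I_m, (i <= j)%N -> p (r i) <= p (r j)) :
  [/\ (forall S : {set 'I_m},
         d_alpha p alpha S = d_alpha p alpha (S :&: Z_alpha p alpha r)),
      (forall Y : {set 'I_m},
         (forall S : {set 'I_m}, d_alpha p alpha S = d_alpha p alpha (S :&: Y)) ->
         Z_alpha p alpha r \subset Y),
      d_alpha p alpha (Z_alpha p alpha r) = (m - h_alpha p alpha r)%N
    & Z_alpha p alpha r \subset B_alpha p alpha r].
Proof. exact: main_sec hp halpha hsort. Qed.
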